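(* In a combinatorial auction as described in the context, if $(x^*,p)$ is a Walrasian equilibrium whose payments $\rho_i=p\,a^{i*}$ form a minimum-revenue core-selecting (MRC) payment vector, then $(x^*,p)$ is a price-match equilibrium.
   Context: Combinatorial auction: item types $j\in\mathcal J$ with supply $c_j\in\mathbb Z_{\ge1}$ (vector $c$); bidders $\mathcal I$; finite set of bids $\mathcal K$, bid $k$ made by bidder $i(k)$ with bundle $a^k\in\mathbb Z^J_{\ge0}$, $a^k\le c$, and amount $b_k\ge0$; $\mathcal K_i$ = bids of bidder $i$; bids taken truthful. $\bm A$ = matrix with columns $a^k$, $\bm B$ with $\bm B_{i,k}=1$ iff $k\in\mathcal K_i$. Feasible allocation: $x\in\{0,1\}^K$, $\bm Ax\le c$, $\bm Bx\le\bm 1$. $w(\mathcal C,c',\cdot)$ = maximum total bid amount over feasible allocations with supply $c'$ using only bids of bidders in $\mathcal C$. $x^*$ efficient (optimal) allocation; $a^{i*},b_{i*}$ bundle and amount of $i$'s accepted bid ($\bm 0,0$ if none). A payment vector $\rho$ ($\rho_i=0$ for non-winners) is core-selecting at $x^*$ if $\rho_i\le b_{i*}$ for all $i$ and $\sum_{i\in\mathcal C}(b_{i*}-\rho_i)+\sum_{i\in\mathcal I}\rho_i\ge w(\mathcal C,c,\mathcal K^{\mathcal C})$ for all $\mathcal C\subseteq\mathcal I$ ($\mathcal K^{\mathcal C}$ = bids of bidders in $\mathcal C$); it is MRC if it minimizes $\sum_i\rho_i$ among core-selecting payment vectors. A Walrasian equilibrium (WE) is $(x^*,p)$, $p\in\mathbb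 R^J_{\ge0}$, with $s_i=b_{i*}-p\,a^{i*}\ge0$, $p\,a^k+s_{i(k)}\ge b_k$ for all bids $k$, and $p_j=0$ whenever $(\bm Ax^* )_j<c_j$. A WE is a price-match equilibrium (PME) if for every bidder $i$ there is a feasible allocation $x^{-i}$ with $x^{-i}_k=0$ for $k\in\mathcal K_i$, $p\,a^k\le b_k$ whenever $x^{-i}_k=1$, and $p\bm Ax^{-i}=p\bm Ax^*$. (Items may include artificial items, i.e. valid cuts added as rows of $\bm A$.) *)

(* Defs.v *)
From HB Require Import structures.
From mathcomp Require Import all_boot all_order all_algebra.
Set Implicit Arguments. Unset Strict Implicit. Unset Printing Implicit Defensive.
Import Order.TTheory GRing.Theory Num.Theory.
Local Open Scope ring_scope.

(* Combinatorial auction data: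
   R      : ordered field of amounts/prices (e.g. the reals),
   I      : bidders, J : item types (incl. artificial items), K : bids,
   owner k = i(k), a k = bundle a^k (column of A), b k = amount b_k.
   An allocation x in {0,1}^K is represented by the set {k | x_k = 1}. *)
Section Auction.
Variables (R : realFieldType) (I J K : finType)
          (owner : K -> I) (a : K -> J -> nat) (b : K -> R).

Definition Ax (x : {set K}) (j : J) : nat := (\sum_(k in x) a k j)%N.

Definition feasible (c' : J -> nat) (x : {set K}) : bool :=
  [forall j, Ax x j <= c' j]%N &&
  [forall i, #|[set k in x | owner k == i]| <= 1]%N.

Definition uses_only (C : {set I}) (x : {set K}) : bool :=
  [forall k in x, owner k \in C].

(* w(C, c', K^C): maximum total bid amount over feasible allocations with
   supply c' using only bids of bidders in C (the empty allocation is always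
   feasible, so with b >= 0 the max with 0 is the true maximum) *)
Definition w (C : {set I}) (c' : J -> nat) : R :=
  \big[Num.max/0]_(x : {set K} | feasible c' x && uses_only C x)
     \sum_(k in x) b k.

Definition efficient (c : J -> nat) (x : {set K}) : Prop :=
  feasible c x /\ \sum_(k in x) b k = w setT c.

(* bundle a^{i*} and amount b_{i*} of bidder i's accepted bid in x
   (0 if none; at most one bid per bidder is accepted in a feasible x) *)
Definition acc_bundle (x : {set K}) (i : I) (j : J) : nat :=
  (\sum_(k in x | owner k == i) a k j)%N.
Definition acc_amount (x : {set K}) (i : I) : R :=
  \sum_(k in x | owner k == i) b k.

Definition pdot (p : J -> R) (v : J -> nat) : R := \sum_j p j * (v j)%:R.

Definition payment_vector (x : {set K}) (rho : I -> R) : Prop :=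
  forall i, [set k in x | owner k == i] = set0 -> rho i = 0.

Definition core_selecting (c : J -> nat) (x : {set K}) (rho : I -> R) : Prop :=
  [/\ payment_vector x rho,
      forall i, rho i <= acc_amount x i &
      forall C : {set I},
        w C c <= \sum_(i in C) (acc_amount x i - rho i) + \sum_i rho i].

Definition MRC (c : J -> nat) (x : {set K}) (rho : I -> R) : Prop :=
  core_selecting c x rho /\
  forall rho', core_selecting c x rho' -> \sum_i rho i <= \sum_i rho' i.

Definition surplus (x : {set K}) (p : J -> R) (i : I) : R :=
  acc_amount x i - pdot p (acc_bundle x i).

Definition walrasian (c : J -> nat) (x : {set K}) (p : J -> R) : Prop :=
  [/\ forall j, 0 <= p j,
      forall i, 0 <= surplus x p i,
      forall k, b k <= pdot p (a k) + surplus x p (owner k) &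
      forall j, (Ax x j < c j)%N -> p j = 0].

Definition price_match (c : J -> nat) (x : {set K}) (p : J -> R) : Prop :=
  walrasian c x p /\
  forall i, exists y : {set K},
    [/\ feasible c y,
        forall k, k \in y -> owner k != i,
        forall k, k \in y -> pdot p (a k) <= b k &
        pdot p (Ax y) = pdot p (Ax x)].

End Auction.

(* Main.v *)
Require Import Defs.
From HB Require Import structures.
From mathcomp Require Import all_boot all_order all_algebra.

Import Order.TTheory GRing.Theory Num.Theory.
Set Implicit Arguments. Unset Strict Implicit.
Local Open Scope ring_scope.

Section Helpers.
Variables (R : realFieldType) (I J K : finType)
          (owner : K -> I) (a : K -> J -> nat) (b : K -> R).

Lemma pdot_sumP (p : J -> R) (P : pred K) :
  pdot p (fun j => \sum_(k | P k) a k j)%N = \sum_(k | P k) pdot p (a k).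
Proof.
rewrite /pdot; under eq_bigr => j _ do rewrite natr_sum mulr_sumr.
exact: exchange_big.
Qed.

Lemma pdotD (p : J -> R) (f g : J -> nat) :
  pdot p (fun j => f j + g j)%N = pdot p f + pdot p g.
Proof. by rewrite /pdot -big_split; apply: eq_bigr => j _; rewrite natrD mulrDr. Qed.

Lemma pdot_ge0 (p : J -> R) f : (forall j, 0 <= p j) -> 0 <= pdot p f.
Proof. by move=> hp; apply: sumr_ge0 => j _; rewrite mulr_ge0. Qed.

Lemma sum_rho (p : J -> R) (x : {set K}) :
  \sum_i pdot p (acc_bundle owner a x i) = pdot p (Ax a x).
Proof.
rewrite /Ax pdot_sumP (partition_big owner predT) //=.
by apply: eq_bigr => i _; rewrite /acc_bundle pdot_sumP.
Qed.

Lemma Ax_split (x : {set K}) i j :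
  Ax a x j = (Ax a [set k in x | owner k != i] j + acc_bundle owner a x i j)%N.
Proof.
rewrite /Ax /acc_bundle (bigID (fun k => owner k != i)) /=; congr (_ + _)%N.
  by apply: eq_bigl => k; rewrite inE.
by apply: eq_bigl => k; rewrite negbK.
Qed.

Lemma feasible_sub c (x y : {set K}) :
  y \subset x -> feasible owner a c x -> feasible owner a c y.
Proof.
move=> yx /andP[/forallP h1 /forallP h2]; apply/andP; split; apply/forallP.
  move=> j; apply: leq_trans (h1 j); rewrite /Ax.
  rewrite [X in (_ <= X)%N](big_setID y) /= (setIidPr yx); exact: leq_addr.
move=> i; apply: leq_trans (h2 i); apply: subset_leq_card.
apply/subsetP => k; rewrite !inE => /andP[ky ->]; by rewrite (subsetP yx k ky).
Qed.

Lemma single_bid c (x : {set K}) k (F : K -> R) :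
  feasible owner a c x -> k \in x ->
  \sum_(k' in x | owner k' == owner k) F k' = F k.
Proof.
move=> /andP[_ /forallP /(_ (owner k)) h] kx.
set S := [set k' in x | owner k' == owner k] in h.
have kS : k \in S by rewrite inE kx eqxx.
have : #|S| == 1%N.
  by rewrite eqn_leq h /=; apply/card_gt0P; exists k.
move=> /cards1P [k0 S1].
have ek : k = k0 by move: kS; rewrite S1 inE => /eqP.
rewrite -ek in S1.
transitivity (\sum_(k' in S) F k'); first by apply: eq_bigl => k'; rewrite inE.
by rewrite S1 big_set1.
Qed.

Lemma single_bid_nat c (x : {set K}) k j :
  feasible owner a c x -> k \in x ->
  acc_bundle owner a x (owner k) j = a k j.
Proof.
move=> /andP[_ /forallP /(_ (owner k)) h] kx.
set S := [set k' in x | owner k' == owner k] in h.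
have kS : k \in S by rewrite inE kx eqxx.
have : #|S| == 1%N.
  by rewrite eqn_leq h /=; apply/card_gt0P; exists k.
move=> /cards1P [k0 S1].
have ek : k = k0 by move: kS; rewrite S1 inE => /eqP.
rewrite -ek in S1.
rewrite /acc_bundle.
transitivity (\sum_(k' in S) a k' j)%N; first by apply: eq_bigl => k'; rewrite inE.
by rewrite S1 big_set1.
Qed.

Lemma w_attained C c :
  exists y, [&& feasible owner a c y & uses_only owner C y] /\
            w owner a b C c <= \sum_(k in y) b k.
Proof.
rewrite /w; apply: (big_ind (fun v => exists y, [&& feasible owner a c y & uses_only owner C y] /\ v <= \sum_(k in y) b k)).
- exists set0; split; last by rewrite big_set0.
  apply/andP; split; last by apply/forall_inP => k; rewrite inE.
  apply/andP; split; apply/forallP => ?.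
    by rewrite /Ax big_set0.
  by rewrite (_ : [set _ in set0 | _] = set0) ?cards0 //; apply/setP => k; rewrite !inE.
- move=> v1 v2 [y1 [h1 l1]] [y2 [h2 l2]]; rewrite maxEle; case: ifP => _.
  + by exists y2.
  + by exists y1.
- by move=> y hy; exists y; split.
Qed.

Lemma sum_surplus_le c C (y : {set K}) (s : I -> R) :
  (forall i, 0 <= s i) -> feasible owner a c y -> uses_only owner C y ->
  \sum_(k in y) s (owner k) <= \sum_(i in C) s i.
Proof.
move=> s0 /andP[_ /forallP hc] /forall_inP hu.
rewrite (partition_big owner (mem C)) //=; apply: ler_sum => i iC.
rewrite (_ : \sum_(k in y | owner k == i) s (owner k) = \sum_(k in [set k in y | owner k == i]) s i); last first.
  by apply: eq_big => [k|k /andP[_ /eqP ->]] //; rewrite inE.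
rewrite sumr_const; move: (hc i); case: #|_| => [|[|//]] _.
  by rewrite mulr0n.
by rewrite mulr1n.
Qed.

End Helpers.

From mathcomp Require Import lra.

Theorem corollary1 (R : realFieldType) (I J K : finType)
  (owner : K -> I) (a : K -> J -> nat) (b : K -> R)
  (c : J -> nat) (xs : {set K}) (p : J -> R)
  (hc : forall j, (0 < c j)%N)
  (ha : forall k j, (a k j <= c j)%N)
  (hb : forall k, 0 <= b k)
  (hx : efficient owner a b c xs)
  (hWE : walrasian owner a b c xs p)
  (hMRC : MRC owner a b c xs (fun i => pdot p (acc_bundle owner a xs i))) :
  price_match owner a b c xs p.
Proof.
have [hxf hxw] := hx.
have hWE' := hWE; case: hWE' => hp hs hbk hzero.
case: hMRC => [[hpv hle hcore] hmin].
split => // i.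
pose rho := fun i => pdot p (acc_bundle owner a xs i).
pose sC := fun C : {set I} =>
  \sum_(h in C) (acc_amount owner b xs h - rho h) + \sum_h rho h.
have hpv' : forall h, [set k in xs | owner k == h] = set0 -> rho h = 0 := hpv.
have hle' : forall h, rho h <= acc_amount owner b xs h := hle.
have hcore' : forall C, w owner a b C c <= sC C := hcore.
have hmin' : forall rho', core_selecting owner a b c xs rho' ->
   \sum_h rho h <= \sum_h rho' h := hmin.
have hpAy : forall y, feasible owner a c y -> pdot p (Ax a y) <= pdot p (Ax a xs).
  move=> y /andP[/forallP hy _]; rewrite /pdot; apply: ler_sum => j _.
  move: hxf => /andP[/forallP hxj _].
  have := hxj j; rewrite leq_eqVlt => /orP[/eqP e|lt].
    by rewrite e ler_wpM2l // ler_nat.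
  by rewrite hzero // !mul0r.
case: (boolP [exists C : {set I}, (i \notin C) && (sC C <= w owner a b C c)]).
- case/existsP => C /andP[iC tight].
  have [y [/andP[fy uy] wy]] := w_attained owner a b C c.
  have e1 : \sum_(k in y) b k <=
      \sum_(k in y) (pdot p (a k) + surplus owner a b xs p (owner k)).
    by apply: ler_sum => k _; apply: hbk.
  have e2 : \sum_(k in y) surplus owner a b xs p (owner k) <=
      \sum_(h in C) surplus owner a b xs p h.
    exact: sum_surplus_le (fun h => hs h) fy uy.
  have e3 : sC C = \sum_(h in C) surplus owner a b xs p h + pdot p (Ax a xs).
    by rewrite /sC sum_rho.
  have e4 := hpAy y fy.
  have e5 : pdot p (Ax a y) = \sum_(k in y) pdot p (a k) by exact: pdot_sumP.
  rewrite big_split /= in e1.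
  exists y; split => //.
  + move=> k ky; apply/eqP => e.
    by move: (forall_inP uy k ky); rewrite e (negbTE iC).
  + move=> k ky.
    pose D := fun k => pdot p (a k) + surplus owner a b xs p (owner k) - b k.
    have D0 : forall k, k \in y -> 0 <= D k.
      by move=> k' _; rewrite /D subr_ge0; apply: hbk.
    have sD : \sum_(k in y) D k = 0.
      apply/eqP; rewrite eq_le sumr_ge0 // andbT.
      rewrite /D sumrB big_split /=; lra.
    have := (psumr_eq0P D0 sD) k ky; rewrite /D => /eqP; rewrite subr_eq0 => /eqP <-.
    by rewrite lerDl hs.
  + apply/eqP; rewrite eq_le e4 /=; lra.
- move/existsPn => nt.
  have nt' : forall C : {set I}, i \notin C -> w owner a b C c < sC C.
    by move=> C iC; move: (nt C); rewrite iC /= -ltNge.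
  have rho0 : 0 <= rho i by apply: pdot_ge0.
  case: (eqVneq (rho i) 0) => [r0 | rpos].
  + exists [set k in xs | owner k != i]; split.
    * apply: feasible_sub hxf; by apply/subsetP => k0; rewrite inE => /andP[].
    * move=> k1; rewrite inE => /andP[] //.
    * move=> k; rewrite inE => /andP[kx _].
      have := hs (owner k); rewrite /surplus /acc_amount (single_bid _ hxf kx).
      have -> : pdot p (acc_bundle owner a xs (owner k)) = pdot p (a k).
        by rewrite /pdot; apply: eq_bigr => j _; rewrite (single_bid_nat j hxf kx).
      by rewrite subr_ge0.
    * have -> : pdot p (Ax a xs) = pdot p (fun j => Ax a [set k in xs | owner k != i] j + acc_bundle owner a xs i j)%N.
        by rewrite /pdot; apply: eq_bigr => j _; rewrite (Ax_split owner a _ i).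
      rewrite pdotD; have -> : pdot p (acc_bundle owner a xs i) = 0 by exact: r0.
      by rewrite addr0.
  + exfalso.
    have rpos' : 0 < rho i by rewrite lt_def rpos rho0.
    pose eps := \big[Order.min/rho i]_(C : {set I} | i \notin C) (sC C - w owner a b C c).
    have epos : 0 < eps.
      apply/bigmin_gtP; split => // C iC; rewrite subr_gt0; exact: nt'.
    have epsr : eps <= rho i by apply: bigmin_le_id.
    have epsC : forall C : {set I}, i \notin C -> eps <= sC C - w owner a b C c.
      by move=> C iC; apply: bigmin_le_cond.
    pose rho' := fun h => if h == i then rho i - eps else rho h.
    have hsum : \sum_h rho' h = \sum_h rho h - eps.
      rewrite (bigD1 i) //= [in RHS](bigD1 i) //= {1}/rho' eqxx.
      have -> : \sum_(h | h != i) rho' h = \sum_(h | h != i) rho h.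
        by apply: eq_bigr => h /negbTE; rewrite /rho' => ->.
      lra.
    have hc' : core_selecting owner a b c xs rho'.
      split.
      * move=> h hh; rewrite /rho'; case: eqP => [e|_]; last exact: hpv'.
        by move: rpos; rewrite -e (hpv' h hh) eqxx.
      * move=> h; rewrite /rho'; case: eqP => [->|_]; last exact: hle'.
        have := hle' i; lra.
      * move=> C; rewrite hsum; have := hcore' C; rewrite /sC.
        case: (boolP (i \in C)) => iC.
          rewrite (bigD1 i) //= [X in _ -> _ <= X + _](bigD1 i) //=. have ri : rho' i = rho i - eps by rewrite /rho' eqxx.
          rewrite ri.
          have -> : \sum_(h in C | h != i) (acc_amount owner b xs h - rho' h) =
                    \sum_(h in C | h != i) (acc_amount owner b xs h - rho h).
            by apply: eq_bigr => h /andP[_ /negbTE]; rewrite /rho' => ->.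
          lra.
        have -> : \sum_(h in C) (acc_amount owner b xs h - rho' h) =
                  \sum_(h in C) (acc_amount owner b xs h - rho h).
          apply: eq_bigr => h hC; rewrite /rho'; case: eqP => // e.
          by move: iC; rewrite -e hC.
        have := epsC C iC; rewrite /sC; lra.
    have := hmin' rho' hc'; rewrite hsum; lra.
Qed.
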